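(* Let $B$ be a board with $c=3$ colors. Then $B$ has no perfect layout if any of the following holds: (a) some sink is two cells away from three sides of the boundary and is adjacent to another sink; (b) some sink is two cells away from two perpendicular (incident) sides of the boundary and is adjacent to the two other sinks; (c) some sink is two cells away from two opposite sides of the boundary and is adjacent to the two other sinks; (d) some sink is two cells away from three sides of the boundary and, in the remaining direction, exactly one blank cell separates it from another sink which is adjacent to the third sink.
   Context: A board is an $m\times n$ grid of unit cells in which exactly $c$ cells are sinks, one of each of $c$ colors, and all other cells are empty. A layout places, in some of the empty cells, arrows, each having one of the $c$ colors and one of the four cardinal directions. A packet of color $i$ may enter the grid through any unit edge of the outer boundary of the grid, into the adjacent cell, moving perpendicular to that edge into the grid; it moves one cell at a time in its current direction, and whenever it enters a cell containing an arrow of color $i$ its direction becomes that arrow's direction (arrows of other colors are ignored). The packet succeeds if it enters the sink of color $i$; it fails if it enters a sink of another color, leaves the grid, or travels forever without reaching a sink. A perfect layout is a layout in which every packet of every color entering through every boundary edge succeeds. A sink is ''two cells away'' from a side of the boundary if, in the straight line from the sink to that side (along its row or column), there are exactly two cells between the sink and that side, both empty. Two sinks are adjacent if their cells share an edge. *)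

(* Defs.v *)
From mathcomp Require Import all_boot.
Set Implicit Arguments. Unset Strict Implicit. Unset Printing Implicit Defensive.

(* A cell is (row, column); row 0 is the top row, column 0 the left column.
   The grid of an m x n board consists of the cells (r, k) with r < m, k < n. *)
Definition cell := (nat * nat)%type.

Inductive dir := North | South | East | West.

Definition opp (d : dir) : dir :=
  match d with North => South | South => North | East => West | West => East end.

Definition perpendicular (d1 d2 : dir) : Prop := d1 <> d2 /\ d1 <> opp d2.

Definition in_grid (m n : nat) (x : cell) : bool := (x.1 < m) && (x.2 < n).

Definition raw_move (d : dir) (x : cell) : option cell :=
  match d with
  | North => if x.1 is r.+1 then Some (r, x.2) else None
  | South => Some (x.1.+1, x.2)
  | West  => if x.2 is k.+1 then Some (x.1, k) else None
  | East  => Some (x.1, x.2.+1)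
  end.

Definition nxt (m n : nat) (d : dir) (x : cell) : option cell :=
  match raw_move d x with
  | Some y => if in_grid m n y then Some y else None
  | None => None
  end.

(* A board: m x n grid with c sinks [sink : 'I_c -> cell] (sink j has color j),
   pairwise distinct, inside the grid; all other cells are empty. *)
Definition is_board (m n c : nat) (sink : 'I_c -> cell) : Prop :=
  (forall j, in_grid m n (sink j)) /\ injective sink.

Definition is_sink (c : nat) (sink : 'I_c -> cell) (x : cell) : Prop :=
  exists j, sink j = x.

(* A layout: optional arrow (color, direction) on each cell. *)
Definition layout (c : nat) := cell -> option ('I_c * dir).

Definition valid_layout (m n c : nat) (sink : 'I_c -> cell) (L : layout c) : Prop :=
  forall x a, L x = Some a -> in_grid m n x /\ ~ is_sink sink x.

(* [succeeds i x d]: a packet of color i that has just entered cell x while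
   moving in direction d eventually enters the sink of color i (in finitely
   many steps, without first entering another sink or leaving the grid). *)
Inductive succeeds (m n c : nat) (sink : 'I_c -> cell) (L : layout c) (i : 'I_c)
  : cell -> dir -> Prop :=
| succ_here : forall d, succeeds m n sink L i (sink i) d
| succ_step : forall x d y,
    ~ is_sink sink x ->
    let d' := match L x with
              | Some (j, e) => if j == i then e else d
              | None => d end in
    nxt m n d' x = Some y ->
    succeeds m n sink L i y d' ->
    succeeds m n sink L i x d.

(* A boundary edge is the side of a grid cell x facing direction (opp d) with no
   grid cell beyond it; the packet enters x moving in direction d. *)
Definition perfect_layout (m n c : nat) (sink : 'I_c -> cell) (L : layout c) : Prop :=
  valid_layout m n sink L /\
  forall (i : 'I_c) (x : cell) (d : dir),
    in_grid m n x -> nxt m n (opp d) x = None -> succeeds m n sink L i x d.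

(* Cell x is "two cells away" from the side of the boundary lying in direction d:
   exactly two cells lie between x and that side, both empty. *)
Definition two_away (m n c : nat) (sink : 'I_c -> cell) (x : cell) (d : dir) : Prop :=
  exists y z, nxt m n d x = Some y /\ nxt m n d y = Some z /\ nxt m n d z = None /\
              ~ is_sink sink y /\ ~ is_sink sink z.

Definition adjacent (m n : nat) (x y : cell) : Prop :=
  exists d, nxt m n d x = Some y.

(* Main.v *)
Require Import Defs.
From mathcomp Require Import all_boot.
From mathcomp Require Import zify.
From Stdlib Require Import Classical.
Set Implicit Arguments. Unset Strict Implicit. Unset Printing Implicit Defensive.

Definition srel (d : dir) (x y : cell) : Prop :=
  match d with
  | North => x.1 = y.1.+1 /\ x.2 = y.2
  | South => y.1 = x.1.+1 /\ y.2 = x.2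
  | West => x.2 = y.2.+1 /\ x.1 = y.1
  | East => y.2 = x.2.+1 /\ y.1 = x.1
  end.

Lemma nxtE m n d (x y : cell) :
  nxt m n d x = Some y <-> (y.1 < m /\ y.2 < n /\ srel d x y).
Proof.
case: x => a b; case: y => c e.
case: d; rewrite /nxt /in_grid /=.
- case: a => [|a] /=; first by split => // [[_ [_ []]]].
  case: ifP => /andP; [move=> [h1 h2]|move=> h].
  + split; [case=> <- <-; lia| move=> [_ [_ [h3 h4]]]]; congr Some; congr pair; lia.
  + split => //; move=> [h1 [h2 [h3 h4]]]; case: h; split; lia.
- case: ifP => /andP; [move=> [h1 h2]|move=> h].
  + split; [case=> <- <-; lia| move=> [_ [_ [h3 h4]]]]; congr Some; congr pair; lia.
  + split => //; move=> [h1 [h2 [h3 h4]]]; case: h; split; lia.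
- case: ifP => /andP; [move=> [h1 h2]|move=> h].
  + split; [case=> <- <-; lia| move=> [_ [_ [h3 h4]]]]; congr Some; congr pair; lia.
  + split => //; move=> [h1 [h2 [h3 h4]]]; case: h; split; lia.
- case: b => [|b] /=; first by split => // [[_ [_ []]]].
  case: ifP => /andP; [move=> [h1 h2]|move=> h].
  + split; [case=> <- <-; lia| move=> [_ [_ [h3 h4]]]]; congr Some; congr pair; lia.
  + split => //; move=> [h1 [h2 [h3 h4]]]; case: h; split; lia.
Qed.

Definition bnd m n (d : dir) (x : cell) : Prop :=
  match d with
  | North => x.1 = 0
  | South => m <= x.1.+1
  | West => x.2 = 0
  | East => n <= x.2.+1
  end.

Lemma nxt_none m n d (x : cell) : in_grid m n x ->
  (nxt m n d x = None <-> bnd m n d x).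
Proof.
case: x => a b; rewrite /in_grid /= => /andP [ha hb].
case: d; rewrite /nxt /in_grid /=.
- case: a ha => [|a] ha /=; first by [].
  case: ifP => /andP h; split => //; lia.
- case: ifP => /andP h; split => //; lia.
- case: ifP => /andP h; split => //; lia.
- case: b hb => [|b] hb /=; first by [].
  case: ifP => /andP h; split => //; lia.
Qed.

Lemma nxt_in m n d x y : nxt m n d x = Some y -> in_grid m n y.
Proof. by move/nxtE => [h1 [h2 _]]; rewrite /in_grid h1 h2. Qed.

Lemma nxt_inv m n d x y : in_grid m n x -> nxt m n d x = Some y ->
  nxt m n (opp d) y = Some x.
Proof.
case: x => a b; rewrite /in_grid /= => /andP [ha hb] /nxtE [h1 [h2 h3]].
apply/nxtE => /=; do 2 (split => //); case: d h3 => /=; lia.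
Qed.

Lemma opp_opp d : opp (opp d) = d. Proof. by case: d. Qed.
Lemma opp_inj d e : opp d = opp e -> d = e. Proof. by case: d; case: e. Qed.

Definition eff (L : layout 3) (i : 'I_3) (x : cell) (d : dir) : dir :=
  match L x with Some (j, e) => if j == i then e else d | None => d end.

Definition ncol (L : layout 3) (i : 'I_3) (x : cell) : Prop := forall e, L x <> Some (i, e).

Lemma eff_ncol L i x d : ncol L i x -> eff L i x d = d.
Proof.
rewrite /eff /ncol; case: (L x) => [[j e]|] // H.
case: eqP => // ji; by case: (H e); rewrite ji.
Qed.

Lemma eff_col L i x d e : L x = Some (i, e) -> eff L i x d = e.
Proof. by rewrite /eff => ->; rewrite eqxx. Qed.

Lemma eff_cases L i x d : eff L i x d = d \/ L x = Some (i, eff L i x d).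
Proof.
rewrite /eff; case: (L x) => [[j e]|]; last by left.
by case: eqP => [->|]; [right|left].
Qed.

Lemma succ_inv m n (sink : 'I_3 -> cell) L i x d :
  succeeds m n sink L i x d ->
  x = sink i \/ (~ is_sink sink x /\ exists y, nxt m n (eff L i x d) x = Some y /\
                 succeeds m n sink L i y (eff L i x d)).
Proof.
case => [d0|x0 d0 y Hs Hn Hsu]; first by left.
right; split => //; by exists y.
Qed.

Lemma succ_other m n (sink : 'I_3 -> cell) L i j d : injective sink ->
  succeeds m n sink L i (sink j) d -> i = j.
Proof.
move=> inj /succ_inv [/inj ji|[H _]]; [by rewrite ji|case: H; by exists j].
Qed.

Lemma other2 (i : 'I_3) : exists j k : 'I_3, j <> i /\ k <> i /\ j <> k.
Proof.
case: i => [[|[|[|i]]] Hi] //.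
- by exists (Ordinal (isT : 1 < 3)), (Ordinal (isT : 2 < 3)); split; [|split] => // /(congr1 val).
- by exists (Ordinal (isT : 0 < 3)), (Ordinal (isT : 2 < 3)); split; [|split] => // /(congr1 val).
- by exists (Ordinal (isT : 0 < 3)), (Ordinal (isT : 1 < 3)); split; [|split] => // /(congr1 val).
Qed.

Lemma all3 (a b c j : 'I_3) : a <> b -> a <> c -> b <> c -> j = a \/ j = b \/ j = c.
Proof.
move=> hab hac hbc.
have hv : forall u v : 'I_3, u <> v -> nat_of_ord u <> nat_of_ord v by move=> u v h /val_inj.
move: (hv _ _ hab) (hv _ _ hac) (hv _ _ hbc) => {hv} hab' hac' hbc'.
have la := ltn_ord a; have lb := ltn_ord b; have lc := ltn_ord c; have lj := ltn_ord j.
have [/val_inj ->|ja] := eqVneq (nat_of_ord j) (nat_of_ord a); first by left.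
have [/val_inj ->|jb] := eqVneq (nat_of_ord j) (nat_of_ord b); first by right; left.
have [/val_inj ->|jc] := eqVneq (nat_of_ord j) (nat_of_ord c); first by right; right.
move: ja jb jc => /eqP ja /eqP jb /eqP jc; lia.
Qed.

Lemma col_or m n (sink : 'I_3 -> cell) (L : layout 3) (i c : 'I_3) l y z :
  is_board m n sink -> perfect_layout m n sink L -> c <> i ->
  nxt m n l (sink i) = Some y -> nxt m n l y = Some z -> nxt m n l z = None ->
  ~ is_sink sink y -> ~ is_sink sink z ->
  (exists e, L z = Some (c, e)) \/ (exists e, L y = Some (c, e)).
Proof.
move=> [Hg inj] [Hv Hp] ci hy hz hzn sy sz.
have gz := nxt_in hz; have gy := nxt_in hy; have gs := Hg i.
have := Hp c z (opp l) gz; rewrite opp_opp => /(_ hzn).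
case/succ_inv => [zs|[_ [y1 [h1 h2]]]]; first by case: sz; exists c.
case: (classic (exists e, L z = Some (c, e))) => [|nz]; first by left.
right; have ncz : ncol L c z by move=> e h; apply: nz; exists e.
rewrite eff_ncol // in h1 h2.
have hzy := nxt_inv gy hz; rewrite hzy in h1; case: h1 => ?; subst y1.
case/succ_inv: h2 => [ys|[_ [y2 [h3 h4]]]]; first by case: sy; exists c.
apply: NNPP => ny; have ncy : ncol L c y by move=> e h; apply ny; exists e.
rewrite eff_ncol // in h3 h4.
have := nxt_inv gs hy; rewrite h3 => -[?]; subst y2.
by have := succ_other inj h4.
Qed.

Lemma two_ncol m n (sink : 'I_3 -> cell) (L : layout 3) (i : 'I_3) l y z :
  is_board m n sink -> perfect_layout m n sink L ->
  nxt m n l (sink i) = Some y -> nxt m n l y = Some z -> nxt m n l z = None ->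
  ~ is_sink sink y -> ~ is_sink sink z ->
  ncol L i y /\ ncol L i z.
Proof.
move=> Hb Hp hy hz hzn sy sz.
have [j [k [ji [ki jk]]]] := other2 i.
have Hj := col_or Hb Hp ji hy hz hzn sy sz.
have Hk := col_or Hb Hp ki hy hz hzn sy sz.
split => e He; case: Hj => [[e1 h1]|[e1 h1]]; case: Hk => [[e2 h2]|[e2 h2]]; congruence.
Qed.

Definition blkB m n (sink : 'I_3 -> cell) (s : cell) l :=
  exists x, nxt m n l s = Some x /\ is_sink sink x.
Definition blkC m n (sink : 'I_3 -> cell) (L : layout 3) i l y :=
  nxt m n l (sink i) = Some y /\ ~ is_sink sink y /\
  (exists w, nxt m n l y = Some w /\ is_sink sink w) /\ L y <> Some (i, opp l).
Definition S3 m n (sink : 'I_3 -> cell) (L : layout 3) i x d :=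
  exists l, d = opp l /\
   ((exists y z, [/\ nxt m n l (sink i) = Some y, nxt m n l y = Some z,
        nxt m n l z = None, ~ is_sink sink y & ~ is_sink sink z] /\ (x = y \/ x = z))
    \/ blkC m n sink L i l x).

Lemma ext_cell m n d (p : cell) : in_grid m n p -> exists w, in_grid m n w /\ nxt m n d w = None.
Proof.
case: p => a b /andP [ha hb].
case: d.
- exists (0, b); split; first by apply/andP; split => //=; lia.
  by apply/nxt_none => //; apply/andP; split => //=; lia.
- exists (m.-1, b); split; first by apply/andP; split => //=; lia.
  by apply/nxt_none => /=; [apply/andP; split => //=; lia|lia].
- exists (a, n.-1); split; first by apply/andP; split => //=; lia.
  by apply/nxt_none => /=; [apply/andP; split => //=; lia|lia].
- exists (a, 0); split; first by apply/andP; split => //=; lia.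
  by apply/nxt_none => //; apply/andP; split => //=; lia.
Qed.

Lemma core m n (sink : 'I_3 -> cell) (L : layout 3) (i : 'I_3) l0 :
  is_board m n sink -> perfect_layout m n sink L ->
  (forall l, two_away m n sink (sink i) l \/ blkB m n sink (sink i) l \/
             exists y, blkC m n sink L i l y) ->
  (blkB m n sink (sink i) l0 \/ exists y, blkC m n sink L i l0 y) -> False.
Proof.
move=> Hb Hpf cls H0.
have [Hg inj] := Hb; have [Hv Hp] := Hpf.
have key : forall x d, succeeds m n sink L i x d -> in_grid m n x ->
   x = sink i \/ S3 m n sink L i x d.
  move=> x d; elim => [d1|x1 d1 y1 Hns d' Hn Hsu IH] gx; first by left.
  right.
  have ed : d' = eff L i x1 d1 := erefl.
  clearbody d'.
  have gy := nxt_in Hn.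
  case: (IH gy) => [ys|[l [dl Hl]]].
  - subst y1.
    have H := nxt_inv gx Hn.
    case: (cls (opp d')) => [[y [z [h1 [h2 [h3 [h4 h5]]]]]]|[[x' [h hs]]|[y [h1 [h2 [h3 h4]]]]]].
    + rewrite H in h1; case: h1 => ?; subst y.
      have [nc _] := two_ncol Hb Hpf H h2 h3 h4 h5.
      have e1 : d' = d1 by rewrite ed eff_ncol.
      exists (opp d'); split; first by rewrite opp_opp.
      left; exists x1, z; split; [split|left] => //.
    + rewrite H in h; case: h => ?; subst x'; by case: Hns.
    + rewrite H in h1; case: h1 => ?; subst y.
      have e1 : d' = d1.
        case: (eff_cases L i x1 d1) => [|e2]; first by rewrite ed.
        by case: h4; rewrite opp_opp e2 ed.
      exists (opp d'); split; first by rewrite opp_opp.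
      right; split => //.
  - rewrite {}dl in Hn IH ed.
    case: Hl => [[y [z [[h1 h2 h3 h4 h5] [ey|ez]]]]|[h1 [h2 [[w [hw sw]] h4]]]].
    + subst y1.
      have := nxt_inv gx Hn; rewrite opp_opp h2 => -[?]; subst x1.
      have [_ nc] := two_ncol Hb Hpf h1 h2 h3 h4 h5.
      have e1 : opp l = d1 by rewrite ed eff_ncol.
      subst d1.
      exists l; split => //; left; exists y, z; split; [split|right] => //.
    + subst y1.
      by have := nxt_inv gx Hn; rewrite opp_opp h3.
    + have := nxt_inv gx Hn; rewrite opp_opp hw => -[?]; subst x1.
      by case: Hns.
have [w [gw hw]] := ext_cell l0 (Hg i).
have := Hp i w (opp l0) gw; rewrite opp_opp => /(_ hw) /key /(_ gw).
have nb : exists x, nxt m n l0 (sink i) = Some x.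
  by case: H0 => [[x [h _]]|[y [h _]]]; eexists; exact: h.
case => [ws|[l [/opp_inj el Hl]]].
  by subst w; case: nb => x; rewrite hw.
subst l.
case: Hl => [[y [z [[h1 h2 h3 h4 h5] _]]]|[_ [_ [[w' [hw' _]] _]]]]; last by rewrite hw' in hw.
case: H0 => [[x [h hs]]|[y' [h1' [_ [[w' [hw' sw]] _]]]]].
  by rewrite h1 in h; case: h => ?; subst x.
rewrite h1 in h1'; case: h1' => ?; subst y'.
by rewrite h2 in hw'; case: hw' => ?; subst w'.
Qed.

Definition shift (d : dir) (x : cell) : cell :=
  match d with
  | North => (x.1.-1, x.2)
  | South => (x.1.+1, x.2)
  | West => (x.1, x.2.-1)
  | East => (x.1, x.2.+1)
  end.

Lemma nxtA m n d (x y : cell) : nxt m n d x = Some y -> (y.1 < m /\ y.2 < n /\ srel d x y).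
Proof. by move/nxtE. Qed.

Lemma nxtN m n d (y z : cell) : nxt m n d y = Some z -> nxt m n d z = None -> bnd m n d z.
Proof. by move=> /nxt_in g /(nxt_none _ g). Qed.

Lemma nxtS m n d (x : cell) : (shift d x).1 < m -> (shift d x).2 < n -> srel d x (shift d x) ->
  nxt m n d x = Some (shift d x).
Proof. by move=> h1 h2 h3; apply/nxtE. Qed.

Lemma nxtB m n d (x : cell) : x.1 < m -> x.2 < n -> bnd m n d x -> nxt m n d x = None.
Proof. by move=> h1 h2 h3; apply/nxt_none => //; apply/andP. Qed.

Lemma geo1 m n D l (s y t u y1 z1 : cell) : l <> D -> l <> opp D ->
  nxt m n D s = Some y -> nxt m n D y = Some t -> nxt m n D t = Some u ->
  nxt m n l s = Some y1 -> nxt m n l y1 = Some z1 -> nxt m n l z1 = None ->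
  [/\ nxt m n l t = Some (shift l t), nxt m n l (shift l t) = Some (shift l (shift l t)),
      nxt m n l (shift l (shift l t)) = None,
      [/\ shift l t <> s, shift l t <> t & shift l t <> u] &
      [/\ shift l (shift l t) <> s, shift l (shift l t) <> t & shift l (shift l t) <> u]].
Proof.
move=> lD lD' h1 h2 h3 h4 h5 h6.
have b6 := nxtN h5 h6; clear h6.
move: h1 h2 h3 h4 h5 => /nxtA h1 /nxtA h2 /nxtA h3 /nxtA h4 /nxtA h5.
move: s y t u y1 z1 h1 h2 h3 h4 h5 b6 => [s1 s2] [y1' y2'] [t1 t2] [u1 u2] [a1 a2] [b1 b2] h1 h2 h3 h4 h5 b6.
case: D lD lD' h1 h2 h3; case: l h4 h5 b6 => //= h4 h5 b6 _ _ h1 h2 h3;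
  (split; [apply: nxtS => /=; lia | apply: nxtS => /=; lia | apply: nxtB => /=; lia
          | split => -[] /=; lia | split => -[] /=; lia]).
Qed.

Lemma geo2 m n D e (s y t u y1 z1 : cell) : e <> D -> e <> opp D ->
  nxt m n D s = Some y -> nxt m n D y = Some t -> nxt m n e t = Some u ->
  nxt m n e s = Some y1 -> nxt m n e y1 = Some z1 -> nxt m n e z1 = None ->
  [/\ nxt m n e u = Some (shift e u), nxt m n e (shift e u) = None &
      [/\ shift e u <> s, shift e u <> t & shift e u <> u]].
Proof.
move=> lD lD' h1 h2 h3 h4 h5 h6.
have b6 := nxtN h5 h6; clear h6.
move: h1 h2 h3 h4 h5 => /nxtA h1 /nxtA h2 /nxtA h3 /nxtA h4 /nxtA h5.
move: s y t u y1 z1 h1 h2 h3 h4 h5 b6 => [s1 s2] [y1' y2'] [t1 t2] [u1 u2] [a1 a2] [b1 b2] h1 h2 h3 h4 h5 b6.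
case: D lD lD' h1 h2; case: e h3 h4 h5 b6 => //= h3 h4 h5 b6 _ _ h1 h2;
  (split; [apply: nxtS => /=; lia | apply: nxtB => /=; lia
          | split => -[] /=; lia]).
Qed.

Lemma one_away m n (sink : 'I_3 -> cell) (L : layout 3) (k : 'I_3) e w :
  is_board m n sink -> perfect_layout m n sink L ->
  nxt m n e (sink k) = Some w -> nxt m n e w = None -> ~ is_sink sink w -> False.
Proof.
move=> [Hg inj] [Hv Hp] h1 h2 sw.
have gw := nxt_in h1.
have guard : forall c, c <> k -> exists ee, L w = Some (c, ee).
  move=> c ck.
  have := Hp c w (opp e) gw; rewrite opp_opp => /(_ h2).
  case/succ_inv => [ws|[_ [y1 [h3 h4]]]]; first by case: sw; exists c.
  apply: NNPP => nc; have ncw : ncol L c w by move=> ee h; apply: nc; exists ee.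
  rewrite eff_ncol // in h3 h4.
  have := nxt_inv (Hg k) h1; rewrite h3 => -[?]; subst y1.
  by have := succ_other inj h4.
have [a [b [ak [bk ab]]]] := other2 k.
have [e1 E1] := guard a ak; have [e2 E2] := guard b bk; congruence.
Qed.

Lemma dir4 (a b c d l : dir) : a <> b -> a <> c -> a <> d -> b <> c -> b <> d -> c <> d ->
  l = a \/ l = b \/ l = c \/ l = d.
Proof.
case: a; case: b; case: c; case: d; case: l => h1 h2 h3 h4 h5 h6;
first [by left | by right; left | by right; right; left | by right; right; right
      | by exfalso; (apply h1||apply h2||apply h3||apply h4||apply h5||apply h6)].
Qed.

Lemma nbr_ns m n (sink : 'I_3 -> cell) (x w : cell) l :
  two_away m n sink x l -> nxt m n l x = Some w -> ~ is_sink sink w.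
Proof. by move=> [y [z [h1 [_ [_ [hy _]]]]]]; rewrite h1 => -[<-]. Qed.

Lemma nonsink3 (sink : 'I_3 -> cell) (s t u : 'I_3) w : t <> s -> u <> s -> u <> t ->
  w <> sink s -> w <> sink t -> w <> sink u -> ~ is_sink sink w.
Proof.
move=> ts us ut h1 h2 h3 [j hj].
have := all3 j (nesym ts) (nesym us) (nesym ut).
case=> [|[|]] ?; subst j; congruence.
Qed.

Lemma case_bc m n (sink : 'I_3 -> cell) (L : layout 3) (s : 'I_3) d1 d2 :
  is_board m n sink -> perfect_layout m n sink L -> d1 <> d2 ->
  two_away m n sink (sink s) d1 -> two_away m n sink (sink s) d2 ->
  (forall t : 'I_3, t <> s -> adjacent m n (sink s) (sink t)) -> False.
Proof.
move=> Hb Hpf d12 T1 T2 Ht.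
have [Hg inj] := Hb.
have [j [k [js [ks jk]]]] := other2 s.
have [e1 h1] := Ht j js; have [e2 h2] := Ht k ks.
have ns1 : forall e x, two_away m n sink (sink s) e -> nxt m n e (sink s) = Some (sink x) -> False.
  by move=> e x T h; apply: (nbr_ns T h); exists x.
have a1 : d1 <> e1 by move=> E; subst; exact: ns1 _ _ T1 h1.
have a2 : d1 <> e2 by move=> E; subst; exact: ns1 _ _ T1 h2.
have a3 : d2 <> e1 by move=> E; subst; exact: ns1 _ _ T2 h1.
have a4 : d2 <> e2 by move=> E; subst; exact: ns1 _ _ T2 h2.
have a5 : e1 <> e2 by move=> E; subst; rewrite h1 in h2; case: h2 => /inj.
apply: (core (i := s) (l0 := e1) Hb Hpf).
  move=> l; case: (dir4 l d12 a1 a2 a3 a4 a5) => [->|[->|[->|->]]].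
  - by left.
  - by left.
  - by right; left; exists (sink j); split => //; exists j.
  - by right; left; exists (sink k); split => //; exists k.
by left; exists (sink j); split => //; exists j.
Qed.

Theorem mainTheorem10 (m n : nat) (sink : 'I_3 -> cell) :
  is_board m n sink ->
  (* (a) *)
  ((exists (s : 'I_3) (D : dir),
      (forall d, d <> D -> two_away m n sink (sink s) d) /\
      exists t : 'I_3, t <> s /\ adjacent m n (sink s) (sink t))
   \/
   (* (b) *)
   (exists (s : 'I_3) (d1 d2 : dir), perpendicular d1 d2 /\
      two_away m n sink (sink s) d1 /\ two_away m n sink (sink s) d2 /\
      forall t : 'I_3, t <> s -> adjacent m n (sink s) (sink t))
   \/
   (* (c) *)
   (exists (s : 'I_3) (d : dir),
      two_away m n sink (sink s) d /\ two_away m n sink (sink s) (opp d) /\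
      forall t : 'I_3, t <> s -> adjacent m n (sink s) (sink t))
   \/
   (* (d) *)
   (exists (s : 'I_3) (D : dir),
      (forall d, d <> D -> two_away m n sink (sink s) d) /\
      exists (t u : 'I_3) (y : cell),
        t <> s /\ u <> s /\ u <> t /\
        nxt m n D (sink s) = Some y /\ ~ is_sink sink y /\
        nxt m n D y = Some (sink t) /\
        adjacent m n (sink t) (sink u))) ->
  ~ exists L : layout 3, perfect_layout m n sink L.
Proof.
move=> Hb Hcase [L Hpf]; have [Hg inj] := Hb.
case: Hcase => [A|[B|[C|Dd]]].
- move: A => [s [D [Hl [t [ts [e he]]]]]].
  have eD : e = D.
    apply: NNPP => neD; apply: (nbr_ns (Hl e neD) he); by exists t.
  subst e.
  apply: (core (i := s) (l0 := D) Hb Hpf).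
    move=> l; case: (classic (l = D)) => [->|lD]; last by left; exact: Hl.
    by right; left; exists (sink t); split => //; exists t.
  by left; exists (sink t); split => //; exists t.
- move: B => [s [d1 [d2 [[p1 _] [T1 [T2 Ht]]]]]].
  exact: (case_bc Hb Hpf p1 T1 T2 Ht).
- move: C => [s [d [T1 [T2 Ht]]]].
  have p1 : d <> opp d by case: d {T1 T2}.
  exact: (case_bc Hb Hpf p1 T1 T2 Ht).
- move: Dd => [s [D [Hl [t [u [y [ts [us [ut [hy [sy [ht [e he]]]]]]]]]]]]].
  have gy := nxt_in hy.
  have Ly : L y = Some (s, opp D).
    apply: NNPP => ne.
    have CC : blkC m n sink L s D y.
      by split => //; split => //; split => //; exists (sink t); split => //; exists t.
    apply: (core (i := s) (l0 := D) Hb Hpf); last by right; exists y.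
    move=> l; case: (classic (l = D)) => [->|lD]; last by left; exact: Hl.
    by right; right; exists y.
  have hty := nxt_inv gy ht.
  have hys := nxt_inv (Hg s) hy.
  have : e = D \/ e = opp D \/ (e <> D /\ e <> opp D).
    by case: e {he}; case: D {Hl hy ht Ly hty hys} => /=; intuition congruence.
  case => [eD|[eD|[eD eD']]].
  + subst e.
    apply: (core (i := t) (l0 := D) Hb Hpf); last by left; exists (sink u); split => //; exists u.
    move=> l.
    case: (classic (l = D)) => [->|lD].
      by right; left; exists (sink u); split => //; exists u.
    case: (classic (l = opp D)) => [->|lD'].
      right; right; exists y; split => //; split => //; split.
        by exists (sink s); split => //; exists s.
      by rewrite opp_opp Ly => -[] /esym.
    left.
    have [y1 [z1 [h4 [h5 [h6 _]]]]] := Hl l lD.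
    have [g1 g2 g3 [n1 n2 n3] [n4 n5 n6]] := geo1 lD lD' hy ht he h4 h5 h6.
    exists (shift l (sink t)), (shift l (shift l (sink t))); do 3 (split => //).
    split; exact: nonsink3 ts us ut _ _ _.
  + subst e; rewrite hty in he; case: he => E.
    by apply: sy; exists u.
  + have [y1 [z1 [h4 [h5 [h6 _]]]]] := Hl e eD.
    have [g1 g2 [n1 n2 n3]] := geo2 eD eD' hy ht he h4 h5 h6.
    apply: (one_away (k := u) Hb Hpf g1 g2).
    exact: nonsink3 ts us ut _ _ _.
Qed.
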